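(* Fix a solution point $i$ with Jacobian value $J_i>0$. For a state $\hat{\mathbf U}=J_i[\rho,\rho V_1,\rho V_2,\rho V_3,\rho E]^\top\in\mathbb R^5$ with $\rho>0$, let $\mathrm{IE}(\hat{\mathbf U})=\hat u_5-\dfrac{\hat u_2^2+\hat u_3^2+\hat u_4^2}{2\hat u_1}$ denote its internal energy (where $\hat u_k$ are the components of $\hat{\mathbf U}$). Let $\hat{\mathbf U}_1,\hat{\mathbf U}_p\in\mathbb R^5$ be given, with $\hat{\mathbf U}_1$ having positive density $(\rho_1)_i>0$ and positive internal energy $\mathrm{IE}(\hat{\mathbf U}_1)>0$. For $\theta\in[0,1]$ put $\hat{\mathbf U}(\theta)=(1-\theta)\hat{\mathbf U}_1+\theta\hat{\mathbf U}_p$ with density $\rho_i(\theta)$ (first component divided by $J_i$). Let $\aleph\in(0,1)$, $\epsilon^{\rho}_i=(\rho_1)_i\aleph$, $\epsilon^{\mathrm{IE}}_i=\mathrm{IE}(\hat{\mathbf U}_1)\aleph$, and let $H^{\rho}_i=\{\theta\in[0,1]:\rho_i(\theta)\ge\epsilon^{\rho}_i\}=[0,\theta^{\rho}_i]$ with $0<\theta^{\rho}_i\le1$. Define $$H^{\mathrm{IE}}_i=\{\theta\in H^{\rho}_i\;:\;\mathrm{IE}(\hat{\mathbf U}(\theta))\ge\epsilon^{\mathrm{IE}}_i\}.$$ Then $H^{\mathrm{IE}}_i=[0,\theta^{\mathrm{IE}}_i]$ for some $0<\theta^{\mathrm{IE}}_i\le\theta^{\rho}_i$. Moreover: (1) if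 $0\le\theta<\theta^{\mathrm{IE}}_i$, then $\mathrm{IE}(\hat{\mathbf U}(\theta))>\epsilon^{\mathrm{IE}}_i$; and (2) if $\theta^{\mathrm{IE}}_i<\theta^{\rho}_i$, then $\mathrm{IE}(\hat{\mathbf U}(\theta^{\mathrm{IE}}_i))=\epsilon^{\mathrm{IE}}_i$.
   Context: $\hat{\mathbf U}_1$ and $\hat{\mathbf U}_p$ are the first-order (positivity-preserving) and $p$th-order updates at a solution point of a spectral collocation scheme; $\hat{\mathbf U}(\theta)$ is their convex blend with flux limiter $\theta$. The fact that $H^{\rho}_i$ is an interval $[0,\theta^\rho_i]$ with $0<\theta^\rho_i\le 1$ follows since $\rho_i(\theta)$ is affine in $\theta$ with $\rho_i(0)>\epsilon^\rho_i$. *)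

(* Defs.v *)
From mathcomp Require Import all_boot all_order all_algebra.
From mathcomp Require Import reals.
Set Implicit Arguments. Unset Strict Implicit. Unset Printing Implicit Defensive.
Import Order.TTheory GRing.Theory Num.Theory.
Local Open Scope ring_scope.

Section Defs.
Variable R : realType.

(* Internal energy IE(U) = u5 - (u2^2+u3^2+u4^2)/(2 u1)  (0-based indices). *)
Definition IE (U : 'rV[R]_5) : R :=
  U 0 (4 : 'I_5) - (U 0 (1 : 'I_5) ^+ 2 + U 0 (2 : 'I_5) ^+ 2 + U 0 (3 : 'I_5) ^+ 2)
                   / (2 * U 0 (0 : 'I_5)).

Definition dens (J : R) (U : 'rV[R]_5) : R := U 0 (0 : 'I_5) / J.

Definition blend (U1 Up : 'rV[R]_5) (theta : R) : 'rV[R]_5 :=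
  (1 - theta) *: U1 + theta *: Up.

Definition Hrho (J aleph : R) (U1 Up : 'rV[R]_5) (theta : R) : Prop :=
  0 <= theta <= 1 /\ dens J (blend U1 Up theta) >= dens J U1 * aleph.

Definition HIE (J aleph : R) (U1 Up : 'rV[R]_5) (theta : R) : Prop :=
  Hrho J aleph U1 Up theta /\ IE (blend U1 Up theta) >= IE U1 * aleph.

End Defs.

(* Main.v *)
Require Import Defs.
From mathcomp Require Import all_boot all_order all_algebra.
From mathcomp Require Import reals.
From mathcomp Require Import polyrcf ring lra.
Import Order.TTheory GRing.Theory Num.Theory.
Local Open Scope ring_scope.

Lemma sq_conv (R : realFieldType) (a b x y t : R) :
  0 < a -> 0 < b -> 0 <= t <= 1 ->
  ((1-t)*x+t*y)^+2/((1-t)*a+t*b) <= (1-t)*(x^+2/a) + t*(y^+2/b).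
Proof.
move=> a0 b0 /andP[t0 t1].
have c0 : 0 < (1-t)*a+t*b.
  have [->|tn0] := eqVneq t 0; first by rewrite subr0 mul1r mul0r addr0.
  have tp : 0 < t by rewrite lt0r tn0.
  apply: ltr_wpDl; first by apply: mulr_ge0 => //; [lra|apply: ltW].
  exact: mulr_gt0.
set p := x / a. set q := y / b.
have ex : x = a * p by rewrite /p mulrC divfK // gt_eqF.
have ey : y = b * q by rewrite /q mulrC divfK // gt_eqF.
rewrite ex ey.
have -> : (a * p)^+2/a = a * p^+2 by field; rewrite gt_eqF.
have -> : (b * q)^+2/b = b * q^+2 by field; rewrite gt_eqF.
rewrite ler_pdivrMr // -subr_ge0.
have -> : ((1 - t) * (a * p ^+ 2) + t * (b * q ^+ 2)) * ((1 - t) * a + t * b) -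
   ((1 - t) * (a * p) + t * (b * q)) ^+ 2 = (t*(1-t))*(a*b)*(p-q)^+2 by ring.
apply: mulr_ge0; last exact: sqr_ge0.
apply: mulr_ge0; apply: mulr_ge0; try lra; exact: ltW.
Qed.

Lemma IE_conc (R : realType) (A B : 'rV[R]_5) (t : R) :
  0 < A 0 0 -> 0 < B 0 0 -> 0 <= t <= 1 ->
  (1-t)*IE A + t*IE B <= IE ((1-t)*:A + t*:B).
Proof.
move=> a0 b0 ht.
have c0 : 0 < (1-t)*A 0 0+t*B 0 0.
  case/andP: ht => t0 t1.
  have [->|tn0] := eqVneq t 0; first by rewrite subr0 mul1r mul0r addr0.
  have tp : 0 < t by rewrite lt0r tn0.
  apply: ltr_wpDl; first by apply: mulr_ge0 => //; [lra|apply: ltW].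
  exact: mulr_gt0.
rewrite /IE !mxE.
have E : forall (c x y z : R), 0 < c -> (x^+2+y^+2+z^+2)/(2*c) = (x^+2/c + y^+2/c + z^+2/c)/2.
  by move=> c x y z c0'; field; rewrite gt_eqF.
rewrite !E //.
have h1 := @sq_conv _ _ _ (A 0 1) (B 0 1) _ a0 b0 ht.
have h2 := @sq_conv _ _ _ (A 0 2) (B 0 2) _ a0 b0 ht.
have h3 := @sq_conv _ _ _ (A 0 3) (B 0 3) _ a0 b0 ht.
lra.
Qed.

Theorem lemma2 (R : realType) (J aleph theta_rho : R) (U1 Up : 'rV[R]_5) :
  0 < J ->
  0 < dens J U1 ->
  0 < IE U1 ->
  0 < aleph < 1 ->
  0 < theta_rho <= 1 ->
  (forall theta : R, Hrho J aleph U1 Up theta <-> 0 <= theta <= theta_rho) ->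
  exists theta_IE : R,
    [/\ 0 < theta_IE <= theta_rho,
        (forall theta : R, HIE J aleph U1 Up theta <-> 0 <= theta <= theta_IE),
        (forall theta : R, 0 <= theta < theta_IE ->
            IE (blend U1 Up theta) > IE U1 * aleph)
      & (theta_IE < theta_rho -> IE (blend U1 Up theta_IE) = IE U1 * aleph)].
Proof.
move=> J0 d0 ie0 /andP[al0 al1] /andP[tr0 tr1] H.
set eps := IE U1 * aleph.
set f := fun th => IE (blend U1 Up th) - eps.
have b0 : blend U1 Up 0 = U1 by rewrite /blend subr0 scale1r scale0r addr0.
have f0 : 0 < f 0.
  rewrite /f b0 /eps subr_gt0 -{2}(mulr1 (IE U1)) ltr_pM2l //.
have rpos : forall th, 0 <= th <= theta_rho -> 0 < blend U1 Up th 0 0.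
  move=> th /H [_ hd].
  have : 0 < dens J (blend U1 Up th) by apply: lt_le_trans hd; apply: mulr_gt0.
  by rewrite /dens pmulr_lgt0 // invr_gt0.
have conc : forall x y t, 0 <= x <= theta_rho -> 0 <= y <= theta_rho -> 0 <= t <= 1 ->
    (1-t)*f x + t*f y <= f ((1-t)*x+t*y).
  move=> x y t hx hy ht; rewrite /f.
  have -> : blend U1 Up ((1-t)*x+t*y) = (1-t)*:blend U1 Up x + t*:blend U1 Up y.
    by apply/rowP => k; rewrite !mxE; ring.
  rewrite /f.
  have := @IE_conc _ _ _ _ (rpos x hx) (rpos y hy) ht.
  lra.
have between : forall x y, 0 <= x -> x < y -> y <= theta_rho -> 0 <= f y -> 0 < f x.
  move=> x y x0 xy yr fy.
  have y0 : 0 < y by apply: le_lt_trans xy.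
  set t := x / y.
  have t0 : 0 <= t by rewrite /t divr_ge0 // ltW.
  have t1 : t < 1 by rewrite /t ltr_pdivrMr // mul1r.
  have := conc 0 y t.
  have -> : (1-t)*0 + t*y = x by rewrite mulr0 add0r /t divfK // gt_eqF.
  move=> /(_ _ _ _) h.
  have := h ltac:(lra) ltac:(lra) ltac:(lra).
  have : 0 < (1-t)*f 0 by apply: mulr_gt0 => //; lra.
  have : 0 <= t * f y by apply: mulr_ge0.
  lra.
have fge : forall th, (eps <= IE (blend U1 Up th)) = (0 <= f th).
  by move=> th; rewrite /f subr_ge0.
have fgt : forall th, (eps < IE (blend U1 Up th)) = (0 < f th).
  by move=> th; rewrite /f subr_gt0.
have [fr|fr] := lerP 0 (f theta_rho).
  exists theta_rho; split.
  - by rewrite tr0 lexx.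
  - move=> th; split; first by case => /H.
    move=> hth; split; first exact/H.
    rewrite /eps fge.
    case/andP: hth => h0 h1.
    have [->|ne] := eqVneq th theta_rho; first exact: fr.
    apply: ltW; apply: (between _ theta_rho) => //; first by rewrite lt_neqAle ne.
  - move=> th /andP[h0 h1]; rewrite /eps fgt; exact: (between _ theta_rho).
  - by rewrite ltxx.
pose P (k : 'I_5) : {poly R} := (U1 0 k)%:P + (Up 0 k - U1 0 k)%:P * 'X.
have PE : forall k th, (P k).[th] = blend U1 Up th 0 k.
  by move=> k th; rewrite /P !hornerE !mxE; ring.
pose g : {poly R} := 2%:P * P 0 * (P 4 - eps%:P) - (P 1 ^+2 + P 2 ^+2 + P 3 ^+2).
have gE : forall th, 0 <= th <= theta_rho -> g.[th] = 2 * blend U1 Up th 0 0 * f th.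
  move=> th hth; have := rpos th hth.
  rewrite /g /f /IE !hornerE /= /blend !mxE => r0.
  by field; rewrite gt_eqF.
have tr0' : (0:R) <= 0 <= theta_rho by rewrite lexx /= ltW.
have trr : 0 <= theta_rho <= theta_rho by apply/andP; split; [exact: ltW | exact: lexx].
have hle : (0:R) <= theta_rho by apply: ltW.
have gsign : g.[0] * g.[theta_rho] <= 0.
  rewrite gE // gE //.
  have p0 : 0 < 2 * blend U1 Up 0 0 0 by apply: mulr_gt0 => //; apply: rpos.
  have pr : 0 < 2 * blend U1 Up theta_rho 0 0 by apply: mulr_gt0 => //; apply: rpos.
  apply: ltW; rewrite pmulr_rlt0; last exact: mulr_gt0.
  by rewrite pmulr_rlt0.
have [x xin rx] := polyrcf.poly_ivt hle gsign.
have {xin} /andP[x0 xr] : 0 <= x <= theta_rho by move: xin; rewrite in_itv.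
have xin : 0 <= x <= theta_rho by rewrite x0 xr.
have fx : f x = 0.
  move: rx; rewrite /root gE // => /eqP /eqP.
  rewrite mulf_eq0 mulf_eq0 pnatr_eq0 /= gt_eqF ?rpos //= => /eqP.
  done.
have xpos : 0 < x.
  rewrite lt_neqAle x0 andbT; apply/eqP => ex; move: fx; rewrite -ex => e.
  by move: f0; rewrite e ltxx.
have xlt : x < theta_rho.
  rewrite lt_neqAle xr andbT; apply/eqP => ex; move: fx; rewrite ex => e.
  by move: fr; rewrite e ltxx.
exists x; split.
- by rewrite xpos xr.
- move=> th; split.
  + case => /H /andP[h0 h1]; rewrite fge => hf.
    rewrite h0 /=; rewrite leNgt; apply/negP => hx.
    have := between x th x0 hx h1 hf; rewrite fx ltxx //.
  + move=> /andP[h0 h1]; split; first by apply/H; rewrite h0 (le_trans h1 xr).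
    rewrite fge.
    have [->|ne] := eqVneq th x; first by rewrite fx.
    apply: ltW; apply: (between _ x) => //; first by rewrite lt_neqAle ne.
    by rewrite fx.
- move=> th /andP[h0 h1]; rewrite /eps fgt; apply: (between _ x) => //.
  by rewrite fx.
- move=> _; apply/eqP; rewrite -subr_eq0; apply/eqP; exact: fx.
Qed.
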